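(* Let $T,S\in\mathcal{B}_A(\mathcal{H})$. Then $$\omega_A(TS)\le \|T\|_A\,\omega_A(S)+\tfrac12\,\omega_A\big(TS+ST^{\sharp_A}\big)\quad\text{and}\quad \omega_A(TS)\le \|T\|_A\,\omega_A(S)+\tfrac12\,\omega_A\big(TS-ST^{\sharp_A}\big).$$
   Context: $\mathcal{H}$ is a complex Hilbert space with inner product $\langle\cdot,\cdot\rangle$, and $A$ is a fixed nonzero positive bounded operator on $\mathcal{H}$. Set $\langle x,y\rangle_A=\langle Ax,y\rangle$ and $\|x\|_A=\|A^{1/2}x\|$. $\mathcal{B}_A(\mathcal{H})$ is the set of bounded operators $T$ for which there exists a bounded $S$ with $\langle Tx,y\rangle_A=\langle x,Sy\rangle_A$ for all $x,y$ (equivalently $\mathcal{R}(T^*A)\subseteq\mathcal{R}(A)$). For $T\in\mathcal{B}_A(\mathcal{H})$, $T^{\sharp_A}$ denotes the reduced solution of $AX=T^*A$, i.e. $T^{\sharp_A}=A^\dagger T^*A$ ($A^\dagger$ the Moore–Penrose inverse). For an operator $T$ with $\|Tx\|_A\le\lambda\|x\|_A$ for some $\lambda>0$ and all $x$, $\|T\|_A=\sup\{\|Tx\|_A: \|x\|_A=1\}$, and $\omega_A(T)=\sup\{|\langle Tx,x\rangle_A|:\|x\|_A=1\}$ is the $A$-numerical radius. *)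

(* Defs.v *)
From mathcomp Require Import all_boot all_order all_algebra.
From mathcomp Require Import complex.
From mathcomp Require Import classical_sets reals.
Import GRing.Theory Num.Theory.

Set Implicit Arguments.
Unset Strict Implicit.
Unset Printing Implicit Defensive.

Local Open Scope ring_scope.
Local Open Scope complex_scope.

Section Hilbert.
Variable R : realType.
Variable V : lmodType R[i].
Variable ip : V -> V -> R[i].

Definition hnorm (x : V) : R := Num.sqrt (complex.Re (ip x x)).

Definition is_inner_product : Prop :=
  [/\ (forall x y z, ip (x + y) z = ip x z + ip y z),
      (forall (a : R[i]) x y, ip (a *: x) y = a * ip x y),
      (forall x y, ip y x = (ip x y)^*),
      (forall x, 0 <= ip x x) &
      (forall x, ip x x = 0 -> x = 0)].

Definition is_complete : Prop :=
  forall u : nat -> V,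
    (forall e : R, 0 < e -> exists N, forall m n, (N <= m)%N -> (N <= n)%N ->
        hnorm (u m - u n) < e) ->
    exists l : V, forall e : R, 0 < e -> exists N, forall n, (N <= n)%N ->
        hnorm (u n - l) < e.

Definition is_hilbert : Prop := is_inner_product /\ is_complete.

Definition is_bounded_op (T : V -> V) : Prop :=
  (forall (a : R[i]) x y, T (a *: x + y) = a *: T x + T y) /\
  exists c : R, forall x, hnorm (T x) <= c * hnorm x.

Definition is_positive_op (A : V -> V) : Prop :=
  is_bounded_op A /\ forall x, 0 <= ip (A x) x.

Definition ipA (A : V -> V) (x y : V) : R[i] := ip (A x) y.

Definition Anorm (A : V -> V) (x : V) : R := Num.sqrt (complex.Re (ip (A x) x)).

Definition in_BA (A T : V -> V) : Prop :=
  is_bounded_op T /\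
  exists S : V -> V, is_bounded_op S /\
    forall x y, ipA A (T x) y = ipA A x (S y).

(* X = T^{#_A}: the reduced solution of A X = T^* A, i.e. the bounded X with
   A X = T^* A (written out: <A X x, y> = <A x, T y> = <T^* A x, y>) and
   R(X) contained in closure R(A) = N(A)^perp. *)
Definition is_Asharp (A T X : V -> V) : Prop :=
  [/\ is_bounded_op X,
      (forall x y, ip (A (X x)) y = ip (A x) (T y)) &
      (forall x z, A z = 0 -> ip (X x) z = 0)].

Definition Aopnorm (A T : V -> V) : R :=
  sup [set r : R | exists x, Anorm A x = 1 /\ r = Anorm A (T x)].

Definition Anumrad (A T : V -> V) : R :=
  sup [set r : R | exists x, Anorm A x = 1 /\ r = complex.Re `|ipA A (T x) x|].

End Hilbert.

(* Main.v *)
Require Import Defs.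
From mathcomp Require Import all_boot all_order all_algebra.
From mathcomp Require Import complex.
From mathcomp Require Import classical_sets reals.
From mathcomp Require Import ring lra.
Import Order.TTheory GRing.Theory Num.Theory.
Local Open Scope ring_scope.
Local Open Scope complex_scope.
Set Implicit Arguments.
Unset Strict Implicit.
Set Default Proof Using "All".

Section Md.
Variable R : realType.
Definition md (z : R[i]) : R := complex.Re `|z|.

Lemma mdE (z : R[i]) : `|z| = (md z)%:C.
Proof. by rewrite /md RRe_real // normr_real. Qed.

Lemma md_ge0 (z : R[i]) : 0 <= md z.
Proof. by rewrite -ler0c -mdE. Qed.

Lemma mdM (x y : R[i]) : md (x * y) = md x * md y.
Proof. by apply: complexI; rewrite rmorphM /= -!mdE normrM. Qed.

Lemma mdD (x y : R[i]) : md (x + y) <= md x + md y.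
Proof. by rewrite -lecR rmorphD /= -!mdE ler_normD. Qed.

Lemma mdN (x : R[i]) : md (- x) = md x.
Proof. by rewrite /md normrN. Qed.

Lemma mdR (x : R) : md x%:C = `|x|.
Proof. by apply: complexI; rewrite -mdE normc_def /= expr0n /= addr0 sqrtr_sqr. Qed.

Lemma conjJ (z : R[i]) : conjc z = Num.conj z.
Proof. by []. Qed.

Lemma md_sqr (z : R[i]) : (md z ^+ 2)%:C = z * Num.conj z.
Proof. by rewrite rmorphXn /= -mdE normCK. Qed.

Lemma conjR (t : R) : Num.conj (t%:C) = t%:C :> R[i].
Proof. by apply: conj_Creal; apply/complex_realP; exists t. Qed.

Lemma Re_le_md (z : R[i]) : complex.Re z <= md z.
Proof. by rewrite -lecR -mdE; apply: le_trans (normc_ge_Re z); rewrite lecR ler_norm. Qed.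

Lemma mdi : md 'i = 1 :> R.
Proof. by apply: complexI; rewrite -mdE normc_def /= expr0n expr1n add0r sqrtr1. Qed.

Lemma ge0_RRe (z : R[i]) : 0 <= z -> z = (complex.Re z)%:C.
Proof. by move=> h; rewrite RRe_real // ger0_real. Qed.

End Md.
Arguments md {R} z.

Lemma pow_le1 (R : realType) (v L : R) : 0 <= v ->
  (forall j, v ^+ (2 ^ j.+1) <= L) -> v <= 1.
Proof.
move=> v0 hL; rewrite leNgt; apply/negP => v1.
set e := v - 1; have e0 : 0 < e by rewrite subr_gt0.
have bern n : 1 + n%:R * e <= v ^+ n.
  elim: n => [|n IH]; first by rewrite mul0r addr0 expr0.
  rewrite exprS; apply: le_trans (ler_wpM2l v0 IH).
  have hv : v = e + 1 by rewrite /e subrK.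
  have := mulr_ge0 (ler0n R n) (sqr_ge0 e).
  rewrite hv -natr1; nra.
set B := Num.bound (`|L| / e).
have hB : `|L| / e < B%:R by apply: archi_boundP; rewrite divr_ge0 // ltW.
have hn : (B < 2 ^ B.+1)%N by apply: leq_trans (ltn_expl _ (isT : 1 < 2)%N) _; rewrite leq_exp2l.
have := le_trans (bern (2 ^ B.+1)%N) (hL B).
have h1 : B%:R <= (2 ^ B.+1)%:R :> R by rewrite ler_nat ltnW.
have h2 : `|L| < B%:R * e by rewrite -ltr_pdivrMr.
have h3 : L <= `|L| := ler_norm L.
have h4 : B%:R * e <= (2 ^ B.+1)%:R * e :> R by rewrite ler_pM2r.
lra.
Qed.

Lemma seq_bound (R : realType) (u : nat -> R) (b s K : R) : 0 < b -> 0 < s ->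
  (forall j, 0 <= u j) -> (forall j, u j ^+ 2 <= b * u j.+1) ->
  (forall j, u j ^+ 2 <= K * s ^+ (2 ^ j.+1)) -> u 0%N <= b * s.
Proof.
move=> b0 s0 u0 h1 h2.
pose w j := u j / (b * s ^+ (2 ^ j)).
have sp j : 0 < s ^+ j by rewrite exprn_gt0.
have w0 j : 0 <= w j by rewrite divr_ge0 // mulr_ge0 // ltW.
have wsq j : w j ^+ 2 = u j ^+ 2 / (b ^+ 2 * s ^+ (2 ^ j.+1)).
  by rewrite /w expr_div_n exprMn -exprM expnS mulnC.
have w1 j : w j ^+ 2 <= w j.+1.
  rewrite wsq ler_pdivrMr ?mulr_gt0 ?exprn_gt0 //.
  apply: le_trans (h1 j) _.
  have -> : w j.+1 * (b ^+ 2 * s ^+ (2 ^ j.+1)) = b * u j.+1.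
    rewrite /w; field.
    by rewrite !gt_eqF // exprn_gt0.
  by [].
have w2 j : w j ^+ 2 <= K / b ^+ 2.
  rewrite wsq ler_pdivrMr ?mulr_gt0 ?exprn_gt0 //.
  apply: le_trans (h2 j) _.
  by rewrite mulrA divfK // gt_eqF // exprn_gt0.
have w3 j : w 0%N ^+ (2 ^ j) <= w j.
  elim: j => [|j IH]; first by rewrite expn0 expr1.
  rewrite expnS mulnC exprM; apply: le_trans (w1 j).
  by apply: lerXn2r; rewrite ?nnegrE ?exprn_ge0.
have : w 0%N <= 1.
  apply: (@pow_le1 R _ (K / b ^+ 2)) => // j.
  rewrite expnS mulnC exprM; apply: le_trans (w2 j).
  by apply: lerXn2r; rewrite ?nnegrE ?exprn_ge0.
by rewrite /w expn0 expr1 ler_pdivrMr ?mulr_gt0 // mul1r.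
Qed.

Lemma fh_real (R : realType) (D w N : R) : 0 <= N -> 0 <= w ->
  (forall t, 0 < t -> t * D <= w * (1 + t ^+ 2 * N ^+ 2)) -> D <= 2 * N * w.
Proof.
move=> N0 w0 h.
case: (eqVneq N 0) => [N00|Nn].
  rewrite N00 !mulr0 mul0r leNgt; apply/negP => D0.
  have tp : 0 < (w + 1) / D by rewrite divr_gt0 // ltr_wpDl.
  have H := h _ tp.
  have e1 : (w + 1) / D * D = w + 1 by rewrite divfK // gt_eqF.
  have e0 : ((w + 1) / D) ^+ 2 * N ^+ 2 = 0 by rewrite N00; ring.
  rewrite e1 e0 addr0 mulr1 in H.
  lra.
have Np : 0 < N by rewrite lt_neqAle eq_sym Nn.
have Ni : 0 < N^-1 by rewrite invr_gt0.
have H := h _ Ni.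
have e1 : N^-1 ^+ 2 * N ^+ 2 = 1 by rewrite -exprMn mulVf ?gt_eqF // expr1n.
rewrite e1 in H.
have e2 : D = N * (N^-1 * D) by rewrite mulrA mulfV ?gt_eqF // mul1r.
rewrite e2; have := ler_wpM2l (ltW Np) H; lra.
Qed.

Section Form.
Variables (R : realType) (V : lmodType R[i]) (F : V -> V -> R[i]).
Hypotheses (FD : forall x y z, F (x+y) z = F x z + F y z)
  (FZ : forall a x y, F (a*:x) y = a * F x y)
  (FJ : forall x y, F y x = (F x y)^*) (Fp : forall x, 0 <= F x x).

Definition qn x := Num.sqrt (complex.Re (F x x)).

Lemma F0l y : F 0 y = 0.
Proof. by have := FZ 0 0 y; rewrite scale0r mul0r. Qed.
Lemma FNl x y : F (- x) y = - F x y.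
Proof. by rewrite -scaleN1r FZ mulN1r. Qed.
Lemma FBl x x' y : F (x - x') y = F x y - F x' y.
Proof. by rewrite FD FNl. Qed.
Lemma FDr x y z : F x (y + z) = F x y + F x z.
Proof. by rewrite FJ FD rmorphD /= -!FJ. Qed.
Lemma FZr a x y : F x (a *: y) = a^* * F x y.
Proof. by rewrite FJ FZ rmorphM /= -FJ. Qed.
Lemma FNr x y : F x (- y) = - F x y.
Proof. by rewrite FJ FNl rmorphN /= -FJ. Qed.
Lemma FBr x y y' : F x (y - y') = F x y - F x y'.
Proof. by rewrite FDr FNr. Qed.

Lemma Fxx x : F x x = (complex.Re (F x x))%:C.
Proof. exact: ge0_RRe. Qed.
Lemma ReFxx_ge0 x : 0 <= complex.Re (F x x).
Proof. by rewrite -ler0c -Fxx. Qed.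
Lemma qn_ge0 x : 0 <= qn x.
Proof. exact: sqrtr_ge0. Qed.
Lemma qn_sqr x : qn x ^+ 2 = complex.Re (F x x).
Proof. by rewrite sqr_sqrtr // ReFxx_ge0. Qed.

Lemma qnZ a x : qn (a *: x) = md a * qn x.
Proof.
rewrite /qn FZ FZr mulrA -md_sqr Fxx -rmorphM /= sqrtrM ?sqr_ge0 //.
by rewrite sqrtr_sqr ger0_norm ?md_ge0.
Qed.

Lemma CS_sqr x y : md (F x y) ^+ 2 <= complex.Re (F x x) * complex.Re (F y y).
Proof.
set c := F x y; set X := complex.Re (F x x); set Y := complex.Re (F y y).
set k := md c ^+ 2.
have key t : 0 <= X - 2 * t * k + t ^+ 2 * k * Y.
  have h := Fp (x - (t%:C * c) *: y).
  rewrite FBl !FBr !FZ !FZr in h.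
  suff E : F x x - (t%:C * c)^* * F x y -
    (t%:C * c * F y x - t%:C * c * ((t%:C * c)^* * F y y)) =
    (X - 2 * t * k + t ^+ 2 * k * Y)%:C by rewrite E ler0c in h.
  rewrite [F y x]FJ !conjJ -/c [F x x]Fxx [F y y]Fxx -/X -/Y.
  rewrite !rmorphD !rmorphN !rmorphM /= ?rmorphXn /=.
  have hk : (md c)%:C * (md c)%:C = c * Num.conj c by rewrite -md_sqr rmorphXn expr2.
  rewrite hk conjR.
  have h2 : (2:R)%:C = 2 by rewrite (rmorph_nat (real_complex R)).
  rewrite h2.
  ring.
have Y0 : 0 <= Y by apply: ReFxx_ge0.
have k0 : 0 <= k by apply: sqr_ge0.
have X0 : 0 <= X by apply: ReFxx_ge0.
case: (eqVneq Y 0) => [Ye|Yn].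
  rewrite Ye mulr0 leNgt; apply/negP => kp.
  have := key ((X + 1) / (2 * k)); rewrite Ye mulr0 addr0.
  have -> : 2 * ((X + 1) / (2 * k)) * k = X + 1 by field; rewrite gt_eqF.
  lra.
have Yp : 0 < Y by rewrite lt_neqAle eq_sym Yn Y0.
have := key (Y^-1).
have -> : X - 2 * Y^-1 * k + Y^-1 ^+ 2 * k * Y = X - k / Y by field.
by rewrite subr_ge0 ler_pdivrMr.
Qed.

Lemma CS x y : md (F x y) <= qn x * qn y.
Proof.
have := CS_sqr x y; rewrite -!qn_sqr -exprMn.
by rewrite (@ler_pXn2r _ 2%N) // nnegrE ?md_ge0 ?mulr_ge0 ?qn_ge0.
Qed.
Lemma Fre x : Num.conj (F x x) = F x x.
Proof. by apply: conj_Creal; apply: ger0_real. Qed.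

Lemma qn_eq0 x y : qn x = 0 -> F x y = 0.
Proof.
move=> h; have := CS x y; rewrite h mul0r => h'.
by apply/eqP; rewrite -normr_eq0 mdE; apply/eqP; congr (_%:C); apply/le_anti; rewrite h' md_ge0.
Qed.

Lemma parallel (u v : V) (s : R[i]) :
  F (u + s *: v) (u + s *: v) + F (u - s *: v) (u - s *: v) =
  2 * F u u + 2 * (s * Num.conj s) * F v v.
Proof. rewrite !FD !FNl !FDr !FNr !FZ !FZr -!conjJ; ring. Qed.

Lemma polar (S : V -> V) (SD : forall x y, S (x + y) = S x + S y)
  (SZ : forall a x, S (a *: x) = a *: S x) (u v : V) (s : R[i]) :
  F (S (u + s *: v)) (u + s *: v) - F (S (u - s *: v)) (u - s *: v) =
  2 * (Num.conj s * F (S u) v + s * F (S v) u).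
Proof.
have SN x : S (- x) = - S x by rewrite -scaleN1r SZ scaleN1r.
rewrite !SD SN !SZ !FD !FNl !FDr !FNr !FZ !FZr -!conjJ; ring.
Qed.
End Form.

Section Lin.
Variables (R : realType) (V : lmodType R[i]) (T : V -> V).
Hypothesis Tl : forall (a : R[i]) x y, T (a *: x + y) = a *: T x + T y.
Lemma lin0 : T 0 = 0.
Proof. have := Tl 1 0 0; rewrite !scale1r !addr0 => /(congr1 (fun z => z - T 0)) /=. by rewrite subrr addrK => <-. Qed.
Lemma linD x y : T (x + y) = T x + T y.
Proof. by have := Tl 1 x y; rewrite !scale1r. Qed.
Lemma linZ a x : T (a *: x) = a *: T x.
Proof. by rewrite -[a *: x]addr0 Tl lin0 addr0. Qed.
Lemma linN x : T (- x) = - T x.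
Proof. by rewrite -scaleN1r linZ scaleN1r. Qed.
Lemma linB x y : T (x - y) = T x - T y.
Proof. by rewrite linD linN. Qed.
End Lin.

Lemma sesq_zero (R : realType) (V : lmodType R[i]) (G : V -> V -> R[i]) :
  (forall x y z, G (x + y) z = G x z + G y z) ->
  (forall a x y, G (a *: x) y = a * G x y) ->
  (forall x y z, G x (y + z) = G x y + G x z) ->
  (forall a x y, G x (a *: y) = Num.conj a * G x y) ->
  (forall x, G x x = 0) -> forall x y, G x y = 0.
Proof.
move=> GD GZ GDr GZr G0 x y.
have e1 := G0 (x + y); rewrite !GD !GDr !G0 add0r addr0 in e1.
have e2 := G0 (x + 'i *: y); rewrite !GD !GDr !GZ !GZr !G0 !mulr0 add0r addr0 conjCi in e2.
set a := G x y in e1 e2 *; set b := G y x in e1 e2 *.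
have ii : 'i * 'i = -1 :> R[i] by rewrite -expr2 sqr_i.
have h : 2 * a = (a + b) + 'i * (- 'i * a + 'i * b).
  have -> : (a + b) + 'i * (- 'i * a + 'i * b) = a + b - ('i * 'i) * a + ('i * 'i) * b by ring.
  rewrite ii; ring.
rewrite e1 e2 mulr0 addr0 in h.
by move/eqP: h; rewrite mulf_eq0 pnatr_eq0 /= => /eqP.
Qed.

Section Main.
Variables (R : realType) (V : lmodType R[i]) (ip : V -> V -> R[i]).
Hypothesis hip : is_inner_product ip.
Variable A : V -> V.
Hypothesis hA : is_positive_op ip A.

Lemma ipD x y z : ip (x + y) z = ip x z + ip y z. Proof. by case: hip. Qed.
Lemma ipZ a x y : ip (a *: x) y = a * ip x y. Proof. by case: hip. Qed.
Lemma ipJ x y : ip y x = (ip x y)^*. Proof. by case: hip. Qed.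
Lemma ipP x : 0 <= ip x x. Proof. by case: hip. Qed.

Lemma Al a x y : A (a *: x + y) = a *: A x + A y. Proof. by case: hA => [[]]. Qed.
Lemma AP x : 0 <= ip (A x) x. Proof. by case: hA. Qed.

Lemma Aself x y : ip (A x) y = ip x (A y).
Proof.
apply/eqP; rewrite -subr_eq0; apply/eqP.
apply: (@sesq_zero R V (fun x y => ip (A x) y - ip x (A y))) => {x y}.
- by move=> x y z; rewrite (@linD _ _ _ Al) !ipD; ring.
- by move=> a x y; rewrite (@linZ _ _ _ Al) !ipZ; ring.
- by move=> x y z; rewrite (@linD _ _ _ Al) !(FDr ipD ipZ ipJ ipP); ring.
- by move=> a x y; rewrite (@linZ _ _ _ Al) !(FZr ipD ipZ ipJ ipP) -!conjJ; ring.
- move=> x; rewrite [ip x (A x)]ipJ conjJ; apply/eqP; rewrite subr_eq0; apply/eqP.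
  by rewrite conj_Creal // ger0_real // AP.
Qed.

Definition f x y := ip (A x) y.
Lemma fD x y z : f (x + y) z = f x z + f y z.
Proof. by rewrite /f (@linD _ _ _ Al) ipD. Qed.
Lemma fZ a x y : f (a *: x) y = a * f x y.
Proof. by rewrite /f (@linZ _ _ _ Al) ipZ. Qed.
Lemma fJ x y : f y x = (f x y)^*.
Proof. by rewrite /f Aself ipJ. Qed.
Lemma fP x : 0 <= f x x.
Proof. exact: AP. Qed.

Definition n x := Anorm ip A x.
Definition hn x := hnorm ip x.

Lemma fCS x y : md (f x y) <= n x * n y.
Proof. exact: (CS fD fZ fJ fP). Qed.
Lemma ipCS x y : md (ip x y) <= hn x * hn y.
Proof. exact: (CS ipD ipZ ipJ ipP). Qed.

Lemma hn0 x : 0 <= hn x. Proof. exact: (qn_ge0 ipD ipZ ipJ ipP). Qed.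
Lemma n0 x : 0 <= n x. Proof. exact: (qn_ge0 fD fZ fJ fP). Qed.
Lemma nsq x : n x ^+ 2 = complex.Re (f x x). Proof. exact: (qn_sqr fD fZ fJ fP). Qed.

Lemma bnd_nonneg T : is_bounded_op ip T ->
  exists2 c, 0 <= c & forall x, hn (T x) <= c * hn x.
Proof.
case=> _ [c hc]; exists `|c|; first exact: normr_ge0.
move=> x; apply: le_trans (hc x) _; apply: ler_wpM2r; [exact: hn0 | exact: ler_norm].
Qed.

Lemma n_le_hn : exists2 cA, 0 <= cA & forall x, n x ^+ 2 <= cA * hn x ^+ 2.
Proof.
have [c c0 hc] := bnd_nonneg (proj1 hA); exists c => // x.
rewrite nsq; apply: le_trans (Re_le_md _) _; apply: le_trans (ipCS _ _) _.
by rewrite expr2 mulrA; apply: ler_wpM2r; [exact: hn0 | exact: hc].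
Qed.

Lemma BA_Abnd T : in_BA ip A T -> exists2 c, 0 <= c & forall x, n (T x) <= c * n x.
Proof.
case=> hT [T' [hT' hadj]].
have [cT cT0 hcT] := bnd_nonneg hT.
have [cT' cT'0 hcT'] := bnd_nonneg hT'.
have [cA cA0 hcA] := n_le_hn.
pose M x := T' (T x); pose m := cT' * cT.
have m0 : 0 <= m by apply: mulr_ge0.
have hM x : hn (M x) <= m * hn x.
  by apply: le_trans (hcT' _) _; rewrite /m -mulrA ler_wpM2l.
have hadj' x y : f (T x) y = f x (T' y) := hadj x y.
have fM x y : f (M x) y = f x (M y).
  by rewrite /M fJ -hadj' -fJ hadj'.
pose Mk k := iter k M.
have fMk k x y : f (Mk k x) y = f x (Mk k y).
  elim: k x y => [//|k IH] x y.
  by rewrite /Mk iterS fM IH /Mk iterSr.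
have hMk k x : hn (Mk k x) <= m ^+ k * hn x.
  elim: k => [|k IH]; first by rewrite expr0 mul1r.
  rewrite /Mk iterS exprS -mulrA; apply: le_trans (hM _) _.
  by apply: ler_wpM2l.
have key k x : n (Mk k x) ^+ 2 <= n x * n (Mk (k + k)%N x).
  rewrite nsq fMk /Mk -iterD; exact: le_trans (Re_le_md _) (fCS _ _).
exists (m + 1); first lra.
move=> x.
have nT : n (T x) ^+ 2 <= n x * n (M x).
  rewrite nsq hadj'; exact: le_trans (Re_le_md _) (fCS _ _).
have nTx0 := n0 (T x); have nx0' := n0 x.
case: (eqVneq (n x) 0) => [nx0|nx0].
  rewrite nx0 mul0r in nT; rewrite nx0 mulr0; nra.
have b0 : 0 < n x by rewrite lt_neqAle eq_sym nx0 n0.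
have hMx : n (M x) <= n x * (m + 1).
  have := @seq_bound R (fun j => n (Mk (2 ^ j)%N x)) (n x) (m + 1)
    (cA * hn x ^+ 2) b0 _ _ _ _.
  apply => //.
  - lra.
  - by move=> j; apply: n0.
  - by move=> j; rewrite expnS mul2n -addnn; apply: key.
  - move=> j; apply: le_trans (hcA _) _.
    rewrite -mulrA; apply: ler_wpM2l => //.
    apply: le_trans (_ : (m ^+ (2 ^ j) * hn x) ^+ 2 <= _).
      by apply: lerXn2r; rewrite ?nnegrE ?hn0 ?mulr_ge0 ?exprn_ge0 ?hn0.
    rewrite exprMn -exprM expnS mulnC mulrC; apply: ler_wpM2l; first exact: sqr_ge0.
    by apply: lerXn2r; rewrite ?nnegrE //; lra.
have h3 : n (T x) ^+ 2 <= ((m + 1) * n x) ^+ 2.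
  have h4 : n x * n (M x) <= n x * (n x * (m + 1)) by apply: ler_wpM2l.
  nra.
by rewrite -(@ler_pXn2r _ 2%N) // nnegrE ?mulr_ge0 //; lra.
Qed.

Lemma nZ a x : n (a *: x) = md a * n x.
Proof. exact: (qnZ fD fZ fJ fP). Qed.

Lemma md0 : md (0 : R[i]) = 0.
Proof. by rewrite /md normr0. Qed.

Lemma unitize x : n x != 0 -> n ((n x)^-1%:C *: x) = 1.
Proof. by move=> h; rewrite nZ mdR ger0_norm ?invr_ge0 ?n0 // mulVf. Qed.

Lemma unit_ex : (exists x, A x != 0) -> exists x, n x = 1.
Proof.
case=> x Ax; have nx : n x != 0.
  apply/eqP => h; have := qn_eq0 fD fZ fJ fP (A x) h.
  rewrite /f; case: hip => _ _ _ _ hd /hd Ax0; by rewrite Ax0 eqxx in Ax.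
by exists ((n x)^-1%:C *: x); apply: unitize.
Qed.

Lemma opn_ub T c : (forall (a : R[i]) x y, T (a *: x + y) = a *: T x + T y) ->
  (forall x, n (T x) <= c * n x) -> (exists x, n x = 1) ->
  (forall x, n (T x) <= Aopnorm ip A T * n x) /\ 0 <= Aopnorm ip A T.
Proof.
move=> Tl hc [x1 hx1].
have ub r : (fun r => exists x, Anorm ip A x = 1 /\ r = Anorm ip A (T x)) r ->
    r <= Aopnorm ip A T.
  move=> hr; rewrite /Aopnorm; apply: ub_le_sup => //.
  by exists c => _ [y [hy ->]]; have := hc y; rewrite /n hy mulr1.
split; last first.
  by apply: le_trans (n0 (T x1)) (ub _ _); exists x1.
move=> x; case: (eqVneq (n x) 0) => [nx0|nx0].
  by have := hc x; rewrite nx0 !mulr0.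
have := ub (n (T ((n x)^-1%:C *: x))) (ex_intro _ _ (conj (unitize nx0) erefl)).
rewrite (@linZ _ _ _ Tl) nZ mdR ger0_norm ?invr_ge0 ?n0 // mulrC.
have nxp : 0 < n x by rewrite lt_neqAle eq_sym nx0 n0.
by rewrite ler_pdivrMr // mulrC.
Qed.

Lemma nr_ub W c : (forall x, n x = 1 -> md (f (W x) x) <= c) ->
  forall x, n x = 1 -> md (f (W x) x) <= Anumrad ip A W.
Proof.
move=> hc x hx; rewrite /Anumrad; apply: ub_le_sup.
  by exists c => _ [y [hy ->]]; exact: hc.
by exists x; split.
Qed.

Lemma nr_ge0 W c : (forall x, n x = 1 -> md (f (W x) x) <= c) ->
  (exists x, n x = 1) -> 0 <= Anumrad ip A W.
Proof. by move=> hc [x hx]; apply: le_trans (md_ge0 _) (nr_ub hc hx). Qed.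

Lemma nr_all W c : (forall (a : R[i]) x y, W (a *: x + y) = a *: W x + W y) ->
  (forall x, n x = 1 -> md (f (W x) x) <= c) ->
  forall y, md (f (W y) y) <= Anumrad ip A W * n y ^+ 2.
Proof.
move=> Wl hc y; case: (eqVneq (n y) 0) => [ny0|ny0].
  rewrite fJ (qn_eq0 fD fZ fJ fP (W y) ny0) ny0 expr0n /= mulr0.
  by rewrite oppr0 -[(0 *i)%C]/(0 : R[i]) md0.
have H := nr_ub hc (unitize ny0).
rewrite (@linZ _ _ _ Wl) fZ (FZr fD fZ fJ fP) conjR mulrA -rmorphM mdM mdR in H.
rewrite ger0_norm ?mulr_ge0 ?invr_ge0 ?n0 // in H.
have := ler_wpM2r (sqr_ge0 (n y)) H.
have -> : (n y)^-1 * (n y)^-1 * md (f (W y) y) * n y ^+ 2 = md (f (W y) y).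
  by field.
by [].
Qed.

Lemma nC x : (n x ^+ 2)%:C = f x x.
Proof. by rewrite nsq -(Fxx fD fZ fJ fP). Qed.

Lemma md2V : md (2^-1 : R[i]) = 2^-1.
Proof.
have -> : (2^-1 : R[i]) = (2^-1 : R)%:C by rewrite fmorphV /= (rmorph_nat (real_complex R)).
by rewrite mdR ger0_norm // invr_ge0.
Qed.

Variables (T S Ts : V -> V).
Hypotheses (hA0 : exists x, A x != 0) (hT : in_BA ip A T) (hS : in_BA ip A S)
  (hTs : is_Asharp ip A T Ts).

Lemma final :
  Anumrad ip A (fun x => T (S x))
    <= Aopnorm ip A T * Anumrad ip A S
       + 2^-1 * Anumrad ip A (fun x => T (S x) + S (Ts x)) /\
  Anumrad ip A (fun x => T (S x))
    <= Aopnorm ip A T * Anumrad ip A S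
       + 2^-1 * Anumrad ip A (fun x => T (S x) - S (Ts x)).
Proof.
have ex := unit_ex hA0.
have Tl := proj1 (proj1 hT); have Sl := proj1 (proj1 hS).
have [cT _ hcT] := BA_Abnd hT; have [cS _ hcS] := BA_Abnd hS.
have [hN N0] := opn_ub Tl hcT ex; have [hNS NS0] := opn_ub Sl hcS ex.
set N := Aopnorm ip A T in hN N0 *.
have hTs2 x y : f (Ts x) y = f x (T y) by case: hTs => _ h _; apply: h.
have fT y x : f (T y) x = f y (Ts x) by rewrite (fJ x (T y)) -hTs2 -fJ.
have hTsb x : n (Ts x) <= N * n x.
  have h : n (Ts x) ^+ 2 <= n x * (N * n (Ts x)).
    rewrite nsq hTs2; apply: le_trans (Re_le_md _) _; apply: le_trans (fCS _ _) _.
    by apply: ler_wpM2l; [exact: n0 | exact: hN].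
  have := n0 (Ts x); have := n0 x; have := mulr_ge0 N0 (n0 x); nra.
have hSb x : n x = 1 -> md (f (S x) x) <= Aopnorm ip A S.
  move=> hx; apply: le_trans (fCS _ _) _; rewrite hx mulr1.
  by have := hNS x; rewrite hx mulr1.
set w := Anumrad ip A S.
have w0 : 0 <= w := nr_ge0 hSb ex.
have hw := nr_all Sl hSb.
have hP (u v : V) (s : R[i]) : md (2 * (Num.conj s * f (S u) v + s * f (S v) u))
    <= w * (2 * n u ^+ 2 + 2 * md s ^+ 2 * n v ^+ 2).
  rewrite -(polar fD fZ fJ fP (@linD _ _ _ Sl) (@linZ _ _ _ Sl)).
  apply: le_trans (mdD _ _) _; rewrite mdN.
  apply: le_trans (lerD (hw _) (hw _)) _.
  rewrite -mulrDr; apply: ler_wpM2l => //.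
  rewrite le_eqVlt; apply/orP; left; apply/eqP; apply: complexI.
  have nCC y : (n y)%:C * (n y)%:C = f y y by rewrite -nC expr2 rmorphM.
  have mCC : (md s)%:C * (md s)%:C = s * Num.conj s by rewrite -md_sqr expr2 rmorphM.
  have two : (2 : R)%:C = 2 by rewrite (rmorph_nat (real_complex R)).
  rewrite !rmorphD !rmorphM /= !nCC mCC two.
  exact: (parallel fD fZ fJ fP).
have Dp x : n x = 1 -> md (f (S x) (Ts x) + f (S (Ts x)) x) <= 2 * N * w.
  move=> hx; apply: (@fh_real _ _ _ _ N0 w0) => t tp.
  have := hP x (Ts x) t%:C.
  have -> : 2 * (Num.conj t%:C * f (S x) (Ts x) + t%:C * f (S (Ts x)) x) =
     (2 * t)%:C * (f (S x) (Ts x) + f (S (Ts x)) x).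
    by rewrite conjR rmorphM /= (rmorph_nat (real_complex R)); ring.
  have t0 := ltW tp; rewrite mdM !mdR hx !ger0_norm ?mulr_ge0 //.
  have h5 : n (Ts x) ^+ 2 <= N ^+ 2.
    apply: lerXn2r; rewrite ?nnegrE ?n0 //; try exact: N0; by have := hTsb x; rewrite hx mulr1.
  have h6 : w * (t ^+ 2 * n (Ts x) ^+ 2) <= w * (t ^+ 2 * N ^+ 2).
    by apply: ler_wpM2l => //; apply: ler_wpM2l; rewrite ?sqr_ge0.
  nra.
have Dm x : n x = 1 -> md (f (S x) (Ts x) - f (S (Ts x)) x) <= 2 * N * w.
  move=> hx; apply: (@fh_real _ _ _ _ N0 w0) => t tp.
  have := hP x (Ts x) (t%:C * 'i).
  have -> : 2 * (Num.conj (t%:C * 'i) * f (S x) (Ts x) + (t%:C * 'i) * f (S (Ts x)) x) =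
     - ((2 * t)%:C * 'i) * (f (S x) (Ts x) - f (S (Ts x)) x).
    by rewrite rmorphM /= conjR conjCi rmorphM /= (rmorph_nat (real_complex R)); ring.
  have t0 := ltW tp; rewrite !mdM mdN !mdM !mdR mdi hx !ger0_norm ?mulr_ge0 // !mulr1.
  have h5 : n (Ts x) ^+ 2 <= N ^+ 2.
    apply: lerXn2r; rewrite ?nnegrE ?n0 //; try exact: N0; by have := hTsb x; rewrite hx mulr1.
  have h6 : w * (t ^+ 2 * n (Ts x) ^+ 2) <= w * (t ^+ 2 * N ^+ 2).
    by apply: ler_wpM2l => //; apply: ler_wpM2l; rewrite ?sqr_ge0.
  lra.
have eP x : f (T (S x) + S (Ts x)) x = f (S x) (Ts x) + f (S (Ts x)) x.
  by rewrite fD fT.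
have eM x : f (T (S x) - S (Ts x)) x = f (S x) (Ts x) - f (S (Ts x)) x.
  by rewrite (FBl fD fZ fJ fP) fT.
have bP x : n x = 1 -> md (f (T (S x) + S (Ts x)) x) <= 2 * N * w.
  by move=> hx; rewrite eP; apply: Dp.
have bM x : n x = 1 -> md (f (T (S x) - S (Ts x)) x) <= 2 * N * w.
  by move=> hx; rewrite eM; apply: Dm.
have nP := @nr_ub (fun x => T (S x) + S (Ts x)) _ bP.
have nM := @nr_ub (fun x => T (S x) - S (Ts x)) _ bM.
have half x : f (T (S x)) x =
    2^-1 * (f (T (S x) + S (Ts x)) x + f (T (S x) - S (Ts x)) x).
  by rewrite eP eM fT; field.
split; rewrite {1}/Anumrad; (apply: ge_sup;
  [by case: ex => x hx; exists (md (f (T (S x)) x)), x | move=> _ [x [hx ->]]]);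
  rewrite -[complex.Re `|_|]/(md (f (T (S x)) x));
  rewrite half mdM md2V.
- have h1 := mdD (f (T (S x) + S (Ts x)) x) (f (T (S x) - S (Ts x)) x).
  have h2 := nP x hx; have h3 := bM x hx.
  have h4 : 2^-1 * md (f (T (S x) + S (Ts x)) x + f (T (S x) - S (Ts x)) x) <=
     2^-1 * (md (f (T (S x) + S (Ts x)) x) + md (f (T (S x) - S (Ts x)) x)).
    by apply: ler_wpM2l; [rewrite invr_ge0 | exact: h1].
  lra.
- have h1 := mdD (f (T (S x) + S (Ts x)) x) (f (T (S x) - S (Ts x)) x).
  have h2 := nM x hx; have h3 := bP x hx.
  have h4 : 2^-1 * md (f (T (S x) + S (Ts x)) x + f (T (S x) - S (Ts x)) x) <=
     2^-1 * (md (f (T (S x) + S (Ts x)) x) + md (f (T (S x) - S (Ts x)) x)).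
    by apply: ler_wpM2l; [rewrite invr_ge0 | exact: h1].
  lra.
Qed.
End Main.

Theorem theorem2p2 (R : realType) (V : lmodType R[i]) (ip : V -> V -> R[i])
  (hH : is_hilbert ip) (A : V -> V) (hA : is_positive_op ip A)
  (hA0 : exists x, A x != 0)
  (T S Tsharp : V -> V) (hT : in_BA ip A T) (hS : in_BA ip A S)
  (hTs : is_Asharp ip A T Tsharp) :
  Anumrad ip A (fun x => T (S x))
    <= Aopnorm ip A T * Anumrad ip A S
       + 2^-1 * Anumrad ip A (fun x => T (S x) + S (Tsharp x)) /\
  Anumrad ip A (fun x => T (S x))
    <= Aopnorm ip A T * Anumrad ip A S
       + 2^-1 * Anumrad ip A (fun x => T (S x) - S (Tsharp x)).
Proof.
exact: (@final R V ip (proj1 hH) A hA T S Tsharp hA0 hT hS hTs).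
Qed.
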